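(* Let $q$ be a prime power and $k,\delta,\alpha$ positive integers with $k\ge2$, $\alpha\ge3$ and $\delta>\alpha-2$. Then, with $q,k,\delta,\alpha$ fixed and $n\to\infty$, $$B_q(n,k,\delta;\alpha)=O\!\left(q^{\left(1+\frac{1}{\lfloor\alpha/2\rfloor}\right)(k-1)n}\right).$$
   Context: For a prime power $q$, $\mathcal{G}_q(n,k)$ denotes the set of all $k$-dimensional subspaces of $\mathbb{F}_q^n$. An $\alpha$-$(n,k,\delta)_q^c$ covering Grassmannian code is a subset $\mathcal{C}\subseteq\mathcal{G}_q(n,k)$ (no repeated codewords) such that every set of $\alpha$ distinct codewords of $\mathcal{C}$ spans a subspace of $\mathbb{F}_q^n$ of dimension at least $k+\delta$. $B_q(n,k,\delta;\alpha)$ denotes the maximum size of an $\alpha$-$(n,k,\delta)_q^c$ code. The implied constant in $O(\cdot)$ may depend on $q,k,\delta,\alpha$ but not on $n$. *)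

(* Defs.v *)
From HB Require Import structures.
From mathcomp Require Import all_boot all_algebra all_field.
From Stdlib Require Import Reals.

Set Implicit Arguments.
Unset Strict Implicit.
Unset Printing Implicit Defensive.

Definition subsp (F : finFieldType) (n : nat) : Type := {vspace 'rV[F]_n}.

(* Over a finite field there are finitely many subspaces: transport the
   finType structure of the underlying matrices (vs2mx is injective). *)
HB.instance Definition _ (F : finFieldType) (n : nat) :=
  Finite.copy (subsp F n) (can_type (@VectorInternalTheory.vs2mxK F 'rV[F]_n)).

Definition grassmannian (F : finFieldType) (n k : nat) : {set subsp F n} :=
  [set U : subsp F n | \dim U == k].

(* alpha-(n,k,delta)_q^c covering Grassmannian code: C is a set (no repeated
   codewords) of k-subspaces such that every alpha distinct codewords span a
   subspace of dimension >= k + delta. *)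
Definition is_covering_code (F : finFieldType) (n k delta alpha : nat)
  (C : {set subsp F n}) : bool :=
  (C \subset grassmannian F n k) &&
  [forall S : {set subsp F n},
     ((S \subset C) && (#|S| == alpha)) ==>
     (k + delta <= \dim (\sum_(V in S) V)%VS)%N].

Definition B_cov (F : finFieldType) (n k delta alpha : nat) : nat :=
  \max_(C : {set subsp F n} | is_covering_code k delta alpha C) #|C|.

(* Main.v *)
Require Import Defs.
From HB Require Import structures.
From mathcomp Require Import all_boot all_algebra all_field.
From Stdlib Require Import Reals.
From mathcomp Require Import zify.
From Stdlib Require Import Lia Lra.

Module Helpers.
Import mathcomp.boot.ssrnat.
Local Set Implicit Arguments.
Local Unset Strict Implicit.
Local Unset Printing Implicit Defensive.

Section Geo.
Variables (F : finFieldType) (n : nat).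
Local Notation V := (subsp F n).

Lemma dim_add_line (W : V) (x : 'rV[F]_n) : x \notin W ->
  \dim (W + <[x]>)%VS = (\dim W).+1.
Proof.
move=> xW.
have le1 : \dim (W + <[x]>)%VS <= (\dim W).+1.
  have := dimv_add_leqif W <[x]>; case=> h _.
  by rewrite dim_vline in h; apply: leq_trans h _; rewrite -[(\dim W).+1]addn1 leq_add2l leq_b1.
have sWX : (W <= W + <[x]>)%VS by apply: addvSl.
have : ~~ (\dim (W + <[x]>)%VS <= \dim W).
  apply/negP => hd.
  have e : (W == (W + <[x]>)%VS :> {vspace 'rV[F]_n}) by rewrite eqEdim sWX hd.
  by move/eqP: e xW => e; rewrite e memvE addvSr.
by rewrite -ltnNge => h; apply/eqP; rewrite eqn_leq le1 h.
Qed.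

Lemma exists_sub (U : V) d : d <= \dim U -> exists W : V, (W <= U)%VS /\ \dim W = d.
Proof.
elim: d => [|d IH] hd.
  by exists (0%VS : V); rewrite sub0v dimv0.
have [W [WU dW]] := IH (ltnW hd).
have : ~~ (U <= W)%VS.
  by apply/negP => /dimvS; rewrite dW; move: hd; rewrite ltnNge => /negP.
case/subvPn => x xU xW.
exists ((W + <[x]>)%VS : V); split; last by rewrite dim_add_line // dW.
by rewrite subv_add WU -memvE.
Qed.

Lemma two_hyp (U : V) : 2 <= \dim U -> exists W1 W2 : V,
  [/\ W1 != W2, (W1 <= U)%VS, (W2 <= U)%VS, \dim W1 = (\dim U).-1 & \dim W2 = (\dim U).-1].
Proof.
move=> h2.
have [W1 [W1U dW1]] := exists_sub (leq_pred (\dim U)).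
have : ~~ (U <= W1)%VS.
  apply/negP => /dimvS; rewrite dW1; case: (\dim U) h2 => // d _.
  by rewrite ltnn.
case/subvPn => x xU xW.
have [G [GW dG]] := exists_sub (leq_pred (\dim W1)).
have xG : x \notin G.
  by apply/negP => xg; move/negP: xW; apply; apply: (subvP GW).
exists W1, ((G + <[x]>)%VS : V); split => //.
- apply/negP => /eqP e; move/negP: xW; apply; rewrite e.
  by rewrite memvE addvSr.
- by rewrite subv_add (subv_trans GW W1U) -memvE.
- rewrite dim_add_line // dG dW1; case: (\dim U) h2 => // [[]] //.
Qed.

Lemma dim_add_le1 (X e W : V) : (W <= X)%VS -> (W <= e)%VS ->
  \dim e = (\dim W).+1 -> \dim (X + e)%VS <= (\dim X).+1.
Proof.
move=> WX We de.
have := dimv_sum_cap X e.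
have : \dim W <= \dim (X :&: e)%VS by apply: dimvS; rewrite subv_cap WX We.
rewrite de; lia.
Qed.

End Geo.

Section Code.
Variables (F : finFieldType) (n k : nat).
Local Notation V := (subsp F n).
Hypothesis k2 : 2 <= k.

Definition hyp (U W : V) := (W <= U)%VS && (\dim W == k.-1).
Definition ha (U : V) : V := odflt U [pick W : V | hyp U W].
Definition hb (U : V) : V := odflt U [pick W : V | hyp U W && (W != ha U)].

Lemma hab (U : V) : \dim U = k -> [/\ hyp U (ha U), hyp U (hb U) & ha U != hb U].
Proof.
move=> dU.
have hk : 2 <= \dim U by rewrite dU.
have [W1 [W2 [ne s1 s2 d1 d2]]] := two_hyp hk.
have hW1 : hyp U W1 by rewrite /hyp s1 d1 dU eqxx.
have hW2 : hyp U W2 by rewrite /hyp s2 d2 dU eqxx.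
have ha1 : hyp U (ha U).
  rewrite /ha; case: pickP => [W //|/(_ W1)]; by rewrite hW1.
have hb1 : hyp U (hb U) && (hb U != ha U).
  rewrite /hb; case: pickP => [W //|H].
  have := H W1; have := H W2; rewrite hW1 hW2 /=.
  move/negbFE/eqP => e2; move/negbFE/eqP => e1.
  by move: ne; rewrite e1 e2 eqxx.
by case/andP: hb1 => h1 h2; split => //; rewrite eq_sym.
Qed.

Lemma hab_sum (U : V) : \dim U = k -> (ha U + hb U)%VS = U.
Proof.
move=> dU; have [/andP [s1 /eqP d1] /andP [s2 /eqP d2] ne] := hab dU.
have s : (ha U + hb U <= U)%VS by rewrite subv_add s1 s2.
have : (hb U <= ha U)%VS = false.
  apply/negP => hh.
  have e : (hb U == ha U :> {vspace 'rV[F]_n}).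
   by rewrite eqEdim hh d1 d2 /=; apply: leqnn.
  move/eqP: e => e.
  by move: ne; rewrite e eqxx.
move/negbT/subvPn => [x xb xa].
have ss : (ha U + <[x]> <= ha U + hb U)%VS by apply: addvS => //; rewrite -memvE.
have := dimvS ss; rewrite dim_add_line // d1 => hd.
apply/eqP; rewrite eqEdim s dU; apply: leq_trans hd; case: k k2 => //.
Qed.

Definition other (U c : V) : V := if ha U == c then hb U else ha U.

Definition inc (C : {set V}) (v : V) := [set U in C | (ha U == v) || (hb U == v)].
Definition endp (C : {set V}) := [set v : V | [exists U in C, (ha U == v) || (hb U == v)]].

Lemma arith (e e2 E E2 i t : nat) : e2 <= e - 1 -> 0 < e -> E2 = E - i -> i <= E -> 0 < i -> i < t -> e * t < E -> e2 * t < E2 /\ E2 < E.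
Proof.
move=> h1 h2 h3 h4 h5 h6 h7.
have h8 : e2 * t <= (e - 1) * t by rewrite leq_mul2r h1 orbT.
rewrite mulnBl mul1n in h8.
have h9 : t <= e * t by rewrite leq_pmull.
move: h8 h7 h9; move: (e * t) (e2 * t) => a b; lia.
Qed.

Lemma prune (t : nat) (C : {set V}) : #|endp C| * t < #|C| ->
  exists C' : {set V}, [/\ C' \subset C, C' != set0 & forall v, v \in endp C' -> t <= #|inc C' v|].
Proof.
move: {2}#|C| (leqnn #|C|) => m; elim: m C => [|m IH] C hm hlt.
  by move: hlt; rewrite leqn0 in hm; rewrite (eqP hm) ltn0.
case: (boolP [exists v in endp C, #|inc C v| < t]) => [/existsP [v /andP [vE vlt]]|hall].
- set C2 := C :\: inc C v.
  have incS : inc C v \subset C by apply/subsetP => U; rewrite inE => /andP [].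
  have inc0 : 0 < #|inc C v|.
    move: vE; rewrite inE => /existsP [U /andP [UC hU]].
    by apply/card_gt0P; exists U; rewrite inE UC hU.
  have cC2 : #|C2| = #|C| - #|inc C v|.
    by rewrite cardsD (setIidPr incS).
  have eS : endp C2 \subset endp C :\ v.
    apply/subsetP => x; rewrite !inE => /existsP [U /andP [UC2 hU]].
    move: UC2; rewrite !inE => /andP [nU UC].
    apply/andP; split; last by apply/existsP; exists U; rewrite UC.
    apply/negP => /eqP xv; move: nU; by rewrite UC -xv hU.
  have ce := subset_leq_card eS.
  have cv := cardsD1 v (endp C); rewrite vE in cv.
  have incC := subset_leq_card incS.
  have ce2 : #|endp C2| <= #|endp C| - 1 by rewrite cv /= add1n subn1 /=.
  have e0 : 0 < #|endp C| by rewrite cv.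
  have [h2 h3] := arith ce2 e0 cC2 incC inc0 vlt hlt.
  have [C' [s1 n1 d1]] := IH C2 (leq_trans h3 hm) h2.
  exists C'; split => //; apply: subset_trans s1 _; exact: subsetDl.
- exists C; split => //.
  + apply/set0Pn; apply/card_gt0P; exact: leq_ltn_trans hlt.
  + move=> v vE; move/existsPn: hall => /(_ v); rewrite vE /= -leqNgt; done.
Qed.

End Code.

Section Walks.
Variables (F : finFieldType) (n k delta alpha : nat).
Local Notation V := (subsp F n).
Hypothesis k2 : 2 <= k.
Hypothesis a3 : 3 <= alpha.
Hypothesis hd : alpha - 2 < delta.
Variable C : {set V}.
Hypothesis hcov : is_covering_code k delta alpha C.

Lemma dimC (U : V) : U \in C -> \dim U = k.
Proof.
move: hcov => /andP [hG _] UC.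
by move/subsetP: hG => /(_ U UC); rewrite inE => /eqP.
Qed.

Lemma L1 (W0 : V) (D : {set V}) : D \subset C -> (forall U, U \in D -> (W0 <= U)%VS) ->
  \dim W0 = k.-1 -> alpha <= #|D| ->
  forall T : {set V}, T \subset C -> #|T| <= alpha -> forall X : V, (W0 <= X)%VS ->
  (forall U, U \in T -> (U <= X)%VS) -> k.-1 + #|T| <= \dim X.
Proof.
move=> DC DW dW0 aD.
suff H : forall d (T : {set V}), alpha - #|T| = d -> T \subset C -> #|T| <= alpha ->
  forall X : V, (W0 <= X)%VS -> (forall U, U \in T -> (U <= X)%VS) -> k.-1 + #|T| <= \dim X.
  by move=> T; apply: H.
elim=> [|d IH] T hT TC Ta X W0X TX.
- have eT : #|T| = alpha by apply/eqP; rewrite eqn_leq Ta -subn_eq0 hT.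
  move: hcov => /andP [_ /forallP /(_ T) /implyP hh].
  have h : k + delta <= \dim (\sum_(V in T) V)%VS.
    by apply: hh; apply/andP; split => //; apply/eqP; exact: eT.
  have s : (\sum_(U in T) U <= X)%VS by apply/subv_sumP.
  have := dimvS s => h2.
  have h3 : k.-1 + alpha <= k + delta by move: k2 hd a3; clear; lia.
  by rewrite eT; apply: leq_trans h3 (leq_trans h h2).
- have : ~~ (D \subset T).
    apply/negP => /subset_leq_card h.
    have : #|T| < alpha by rewrite -subn_gt0 hT.
    by rewrite ltnNge (leq_trans aD h).
  case/subsetPn => U UD UT.
  have UC : U \in C by apply: (subsetP DC).
  have cU : #|U |: T| = #|T|.+1 by rewrite cardsU1 UT.
  have h1 : alpha - #|U |: T| = d by rewrite cU subnS hT.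
  have h2 : U |: T \subset C by rewrite subUset sub1set UC TC.
  have h3 : #|U |: T| <= alpha by rewrite cU -subn_gt0 hT.
  have h4 : (W0 <= (X + U)%VS)%VS by apply: subv_trans W0X (addvSl _ _).
  have h5 : forall U', U' \in U |: T -> (U' <= (X + U : V))%VS.
    move=> U'; case/setU1P => [->|/TX h]; first exact: addvSr.
    exact: subv_trans h (addvSl _ _).
  have := IH (U |: T) h1 h2 h3 (X + U)%VS h4 h5.
  have h6 : \dim (X + U : V)%VS <= (\dim X).+1.
    apply: (dim_add_le1 (W := W0)) => //; first exact: DW.
    by rewrite dimC // dW0; case: k k2.
  rewrite cU => h7; move: (leq_trans h7 h6); by rewrite addnS ltnS.
Qed.

End Walks.
Lemma arS (a b c : nat) : a + b = c.+1 + c.+1 -> a <= 2 * c.+1.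
Proof. lia. Qed.
Lemma arF (dX dZ dZ0 dS dT g s : nat) : dX + dZ = (g + s.+1) + (g + s.+1) ->
  g + dS <= dX -> g + dT <= dZ0 -> dZ0 < dZ -> dS + dT = s.+1 + s.+1 -> False.
Proof. lia. Qed.

Section W.
Variables (F : finFieldType) (n k delta alpha : nat).
Local Notation V := (subsp F n).
Hypothesis k2 : 2 <= k.
Hypothesis a3 : 3 <= alpha.
Hypothesis hd : alpha - 2 < delta.
Variable C : {set V}.
Hypothesis hcov : is_covering_code k delta alpha C.
Variables (C' : {set V}) (W0 : V).
Hypothesis C'C : C' \subset C.
Hypothesis W0E : W0 \in endp k C'.
Hypothesis degW0 : alpha <= #|inc k C' W0|.
Local Notation hA := (ha k).
Local Notation hB := (hb k).

Definition adj (c x : V) := ((c + x)%VS \in C') &&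
  (((hA (c + x)%VS == c) && (hB (c + x)%VS == x)) || ((hA (c + x)%VS == x) && (hB (c + x)%VS == c))).

Lemma adj_in c x : adj c x -> (c + x : V)%VS \in C.
Proof. by case/andP => h _; apply: (subsetP C'C). Qed.

Lemma adj_dim c x : adj c x -> [/\ \dim (c + x : V)%VS = k, \dim c = k.-1, \dim x = k.-1 & c != x].
Proof.
move=> h; have d := dimC hcov (adj_in h).
have [/andP [_ /eqP d1] /andP [_ /eqP d2] ne] := hab k2 d.
case/andP: h => _ /orP [] /andP [/eqP e1 /eqP e2]; move: d1 d2 ne; rewrite e1 e2 => d1 d2 ne;
  split => //; by rewrite eq_sym.
Qed.

Lemma adj_other c x : adj c x -> other k (c + x)%VS x = c /\ other k (c + x)%VS c = x.
Proof.
move=> h; have [_ _ _ ne] := adj_dim h.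
rewrite /other; case/andP: h => _ /orP [] /andP [/eqP e1 /eqP e2]; rewrite e1 e2.
- by rewrite eqxx (negbTE ne).
- by rewrite eqxx eq_sym (negbTE ne).
Qed.

Lemma adj_endp c x : adj c x -> x \in endp k C' /\ c \in endp k C'.
Proof.
case/andP => h /orP [] /andP [/eqP e1 /eqP e2]; rewrite !inE; split; apply/existsP;
  exists (c + x)%VS; rewrite h /=; by rewrite ?e1 ?e2 eqxx ?orbT.
Qed.

Definition cur (s : seq V) := head W0 s.
Definition prev (s : seq V) := head W0 (behead s).
Fixpoint valid (s : seq V) : bool :=
  match s with [::] => true | x :: s' => [&& adj (cur s') x, x != prev s' & valid s'] end.
Definition Y (s : seq V) : V := foldr (fun (x : V) (y : V) => ((x + y)%VS : V)) W0 s.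
Fixpoint edges (s : seq V) : seq V :=
  match s with [::] => [::] | x :: s' => ((cur s' + x)%VS : V) :: edges s' end.

Lemma size_edges s : size (edges s) = size s.
Proof. by elim: s => //= x s ->. Qed.

Lemma W0Y s : (W0 <= Y s)%VS.
Proof. elim: s => //= x s h; exact: subv_trans h (addvSr _ _). Qed.

Lemma curY s : (cur s <= Y s)%VS.
Proof. case: s => //= x s; exact: addvSl. Qed.

Lemma dW0 : \dim W0 = k.-1.
Proof.
move: W0E; rewrite inE => /existsP [U /andP [UC hU]].
have d := dimC hcov (subsetP C'C _ UC).
have [/andP [_ /eqP d1] /andP [_ /eqP d2] _] := hab k2 d.
by case/orP: hU => /eqP <-.
Qed.

Lemma cur_endp s : valid s -> cur s \in endp k C'.
Proof. case: s => //= x s /and3P [h _ _]; by case: (adj_endp h). Qed.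

Lemma cur_dim s : valid s -> \dim (cur s) = k.-1.
Proof. case: s => [_|x s /and3P [h _ _]]; [exact: dW0 | by case: (adj_dim h)]. Qed.

Lemma edgesY s : valid s -> forall e, e \in edges s ->
  [/\ e \in C, (hA e <= Y s)%VS, (hB e <= Y s)%VS & (e <= Y s)%VS].
Proof.
elim: s => //= x s IH /and3P [h _ vs] e; rewrite inE => /orP [/eqP ->|es].
- have ic := adj_in h.
  have cx : (cur s + x <= x + Y s)%VS.
    by rewrite subv_add addvSl (subv_trans (curY s) (addvSr _ _)).
  case/andP: h => _ /orP [] /andP [/eqP e1 /eqP e2]; rewrite e1 e2; split => //;
    by rewrite ?(subv_trans (curY s) (addvSr _ _)) ?addvSl.
- have [ic h1 h2 h3] := IH vs e es.
  by split => //; apply: subv_trans (addvSr _ _).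
Qed.

Lemma incW0 : [/\ inc k C' W0 \subset C & forall U, U \in inc k C' W0 -> (W0 <= U)%VS].
Proof.
split.
  apply/subsetP => U; rewrite inE => /andP [UC _]; exact: (subsetP C'C).
move=> U; rewrite inE => /andP [UC hU].
have d := dimC hcov (subsetP C'C _ UC).
have [/andP [s1 _] /andP [s2 _] _] := hab k2 d.
by case/orP: hU => /eqP <-.
Qed.

Lemma L1w (T : {set V}) (X : V) : T \subset C -> #|T| <= alpha -> (W0 <= X)%VS ->
  (forall U, U \in T -> (U <= X)%VS) -> k.-1 + #|T| <= \dim X.
Proof.
have [h1 h2] := incW0.
move=> TC Ta W0X TX; exact: (L1 k2 a3 hd hcov h1 h2 dW0 degW0 TC Ta W0X TX).
Qed.

Lemma card_edges s : uniq (edges s) -> #|[set u in edges s]| = size s.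
Proof. by move=> u; rewrite cardsE (card_uniqP u) size_edges. Qed.

Lemma edges_set s : valid s -> [set u in edges s] \subset C /\
   forall U, U \in [set u in edges s] -> (U <= Y s)%VS.
Proof.
move=> vs; split.
  by apply/subsetP => u; rewrite inE => /(edgesY vs) [].
by move=> U; rewrite inE => /(edgesY vs) [].
Qed.

Lemma claimA s : valid s -> size s <= alpha ->
  [/\ \dim (Y s) = k.-1 + size s, uniq (edges s) &
      forall x s', s = x :: s' -> ~~ (x <= Y s')%VS].
Proof.
elim: s => [|x s IH] /=.
  by move=> _ _; rewrite dW0 addn0; split.
case/and3P => hadj hnb vs hsz.
have [dY us hns] := IH vs (ltnW hsz).
have enot : (cur s + x)%VS \notin edges s.
  apply/negP; case: s hadj hnb vs dY us hns hsz IH => [|y s''] //= hadj hnb vs dY us hns hsz IH.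
  rewrite inE => /orP [/eqP ee|ein2].
  - case/and3P: vs => hadj2 _ _.
    have [_ o1] := adj_other hadj.
    have [o2 _] := adj_other hadj2.
    move: hnb; rewrite /prev /= -/(cur s'') -o2 -ee o1 eqxx //.
  - have vs'' : valid s'' by case/and3P: vs.
    have [_ h1 h2 _] := edgesY vs'' ein2.
    have : (y <= Y s'')%VS.
      by case/andP: hadj => _ /orP [] /andP [/eqP e1 /eqP e2]; [rewrite -e1 | rewrite -e2].
    by move: (hns y s'' erefl) => /negP.
have uq : uniq (edges (x :: s)) by rewrite /= enot us.
have dup : \dim (x + Y s : V)%VS <= (\dim (Y s)).+1.
  have [de dc _ _] := adj_dim hadj.
  have sub : (x + Y s <= Y s + (cur s + x))%VS.
    rewrite subv_add addvSl andbT; exact: subv_trans (addvSr (cur s) x) (addvSr _ _).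
  apply: leq_trans (dimvS sub) _.
  apply: (dim_add_le1 (W := cur s)); [exact: curY | exact: addvSl |].
  by rewrite de dc; case: k k2.
have vxs : valid (x :: s) by rewrite /= hadj hnb vs.
have [eC eY] := edges_set vxs.
have cT : #|[set u in edges (x :: s)]| <= alpha by rewrite card_edges.
have low := L1w eC cT (W0Y (x :: s)) eY.
rewrite card_edges //= in low.
have dimeq : \dim (x + Y s : V)%VS = k.-1 + (size s).+1.
  by apply/eqP; rewrite eqn_leq low andbT; move: dup; rewrite dY addnS.
split => // x' s' [<- <-]; apply/negP => xs.
move/addv_idPr: xs => e.
have : \dim (Y s) = k.-1 + (size s).+1 by rewrite -dimeq e.
rewrite dY addnS => h; exact: (n_Sn _ h).
Qed.

Lemma adj_mem c x : adj c x -> (x == hA (c + x)%VS) || (x == hB (c + x)%VS).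
Proof. by case/andP => _ /orP [] /andP [/eqP e1 /eqP e2]; rewrite ?e1 ?e2 eqxx ?orbT. Qed.

Lemma in_edges_not s c x : valid s -> adj c x -> ~~ (x <= Y s)%VS -> (c + x)%VS \notin edges s.
Proof.
move=> vs ad nx; apply/negP => ein.
have [_ h1 h2 _] := edgesY vs ein.
by case/orP: (adj_mem ad) => /eqP ex; move/negP: nx; apply; rewrite ex.
Qed.

Lemma claimB s s' : valid s -> valid s' -> size s = size s' -> 2 * size s <= alpha ->
  cur s = cur s' -> s = s'.
Proof.
elim: s s' => [|x r IH] [|x' r'] //= vs vs' hsz ha2 hc.
rewrite /cur /= in hc; subst x'.
have vs0 : valid (x :: r) := vs; have vs0' : valid (x :: r') := vs'.
case/and3P: vs => ad1 nb1 vr; case/and3P: vs' => ad2 nb2 vr'.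
have hsz' : size r = size r' by case: hsz.
case: (eqVneq (cur r) (cur r')) => hcr.
  have h2 : 2 * size r <= alpha by apply: leq_trans ha2; rewrite leq_mul2l ltnW ?orbT.
  by rewrite (IH r' vr vr' hsz' h2 hcr).
exfalso.
have sA : size (x :: r) <= alpha by apply: leq_trans ha2; rewrite leq_pmull.
have sA' : size (x :: r') <= alpha by rewrite /= -hsz'.
have [dY us hns] := claimA vs0 sA.
have [dY' us' hns'] := claimA vs0' sA'.
have nx := hns x r erefl.
have nx' := hns' x r' erefl.
set e := (cur r + x)%VS; set e' := (cur r' + x)%VS.
have ee : e != e'.
  apply/negP => /eqP h.
  have [o1 _] := adj_other ad1; have [o2 _] := adj_other ad2.
  by move: hcr; rewrite -o1 -o2 -/e -/e' h eqxx.
have en : e \notin edges r' := in_edges_not vr' ad1 nx'.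
have en' : e' \notin edges r := in_edges_not vr ad2 nx.
set Es := [set u in edges (x :: r)]; set Es' := [set u in edges (x :: r')].
set T := Es :&: Es'.
have TS : T \subset [set u in edges r].
  apply/subsetP => u; rewrite !inE /= => /andP [/orP [/eqP ue|ur] /orP [/eqP ue'|ur']] //.
  - by move: ee; rewrite /e /e' -ue -ue' eqxx.
  - by move: en; rewrite /e -ue ur'.
have [EsC EsY] := edges_set vs0; have [EsC' EsY'] := edges_set vs0'.
have [ErC ErY] := edges_set vr.
have cEs : #|Es| = (size r).+1 by rewrite card_edges.
have cEs' : #|Es'| = (size r).+1 by rewrite card_edges // -hsz'.
set Z := (Y (x :: r) :&: Y (x :: r'))%VS.
set Z0 := (Z :&: Y r)%VS.
have TC : T \subset C by apply: subset_trans EsC; exact: subsetIl.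
have Ta : #|T| <= alpha.
  apply: leq_trans _ sA; rewrite /= -cEs; apply: subset_leq_card; exact: subsetIl.
have W0Z0 : (W0 <= (Z0 : V))%VS by rewrite !subv_cap !W0Y.
have TZ0 : forall U, U \in T -> (U <= (Z0 : V))%VS.
  move=> U UT; rewrite !subv_cap.
  have UT' := UT; rewrite inE in UT'; case/andP: UT' => u1 u2.
  by rewrite EsY // EsY' // ErY // (subsetP TS).
have lowZ0 := L1w TC Ta W0Z0 TZ0.
have xZ : (x <= (Z : V))%VS by rewrite subv_cap !addvSl.
have Z0Z : (Z0 <= Z)%VS by apply: capvSl.
have dZ : \dim (Z0 : V) < \dim (Z : V).
  rewrite ltnNge; apply/negP => hle.
  have eq : (Z0 == Z :> {vspace 'rV[F]_n}) by rewrite eqEdim Z0Z hle.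
  move/eqP: eq => eq.
  have : (x <= Y r)%VS by apply: (subv_trans xZ); rewrite -eq capvSr.
  by move/negP: nx.
set S := Es :|: Es'.
have cSU := cardsUI Es Es'.
have SC : S \subset C by rewrite subUset EsC EsC'.
have Sa : #|S| <= alpha.
  apply: leq_trans ha2; apply: (arS (b := #|T|)); by rewrite cSU cEs cEs'.
have W0X : (W0 <= (Y (x :: r) + Y (x :: r'))%VS)%VS by apply: subv_trans (W0Y _) (addvSl _ _).
have SX : forall U, U \in S -> (U <= (Y (x :: r) + Y (x :: r') : V))%VS.
  move=> U; rewrite in_setU => /orP [u|u].
  - apply: subv_trans (addvSl _ _); exact: EsY.
  - apply: subv_trans (addvSr _ _); exact: EsY'.
have lowS := L1w SC Sa W0X SX.
have sc := dimv_sum_cap (Y (x :: r)) (Y (x :: r')).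
rewrite dY dY' /= -hsz' in sc.
rewrite cEs cEs' in cSU.
exact: (arF sc lowS lowZ0 dZ cSU).
Qed.

Definition nbrs (s : seq V) := enum [set x : V | adj (cur s) x && (x != prev s)].

Fixpoint walks (j : nat) : seq (seq V) :=
  match j with 0 => [:: [::]] | j'.+1 => [seq x :: s | s <- walks j', x <- nbrs s] end.

Lemma walks_spec j s : s \in walks j -> valid s && (size s == j).
Proof.
elim: j s => [|j IH] s /=; first by rewrite inE => /eqP ->.
case/allpairsPdep => s0 [x [s0w xn ->]].
move: xn; rewrite mem_enum inE => /andP [ad nb].
case/andP: (IH s0 s0w) => v0 /eqP sz.
by rewrite /= ad nb v0 sz eqxx.
Qed.

Lemma walks_uniq j : uniq (walks j).
Proof.
elim: j => //= j IH.
apply: allpairs_uniq_dep => //.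
  by move=> s _; exact: enum_uniq.
move=> [s1 x1] [s2 x2] _ _ /= [-> ->] //.
Qed.

Lemma sumn_ge (c : nat) (l : seq (seq V)) (f : seq V -> nat) :
  (forall s, s \in l -> c <= f s) -> c * size l <= sumn (map f l).
Proof.
elim: l => [|a l IH] h /=; first by rewrite muln0.
rewrite mulnS leq_add //; first by apply: h; rewrite inE eqxx.
by apply: IH => s sl; apply: h; rewrite inE sl orbT.
Qed.

Lemma walks_size (t : nat) j : (forall s, valid s -> t.-1 <= size (nbrs s)) ->
  t.-1 ^ j <= size (walks j).
Proof.
move=> hn; elim: j => //= j IH.
rewrite size_allpairs_dep expnS.
apply: leq_trans (sumn_ge (c := t.-1) _); first by rewrite leq_mul2l IH orbT.
by move=> s /walks_spec /andP [vs _]; exact: hn.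
Qed.

Lemma other_inc c U : U \in inc k C' c -> adj c (other k U c) /\ (c + other k U c)%VS = U.
Proof.
rewrite inE => /andP [UC hU].
have d := dimC hcov (subsetP C'C _ UC).
have sU := hab_sum k2 d.
have [_ _ ne] := hab k2 d.
rewrite /other; case: (eqVneq (hA U) c) => [e|e].
- have eq : (c + hB U)%VS = U by rewrite -e.
  split => //; rewrite /adj eq UC e !eqxx //.
- have e2 : hB U = c by move: hU; rewrite (negbTE e) /= => /eqP.
  have eq : (c + hA U)%VS = U by rewrite -e2 addvC.
  split => //; rewrite /adj eq UC e2 !eqxx orbT //.
Qed.

Lemma deg_adj c : #|inc k C' c| <= #|[set x : V | adj c x]|.
Proof.
have inj : {in inc k C' c &, injective (fun U => other k U c)}.
  move=> U1 U2 h1 h2 /= e.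
  have [_ s1] := other_inc h1; have [_ s2] := other_inc h2.
  by rewrite -s1 -s2 e.
rewrite -(card_in_imset inj).
apply: subset_leq_card; apply/subsetP => x hx; case/imsetP: hx => U Ui ->.
by rewrite inE; case: (other_inc Ui).
Qed.

Variable t : nat.
Hypothesis degt : forall v, v \in endp k C' -> t <= #|inc k C' v|.

Lemma nbrs_size s : valid s -> t.-1 <= size (nbrs s).
Proof.
move=> vs; rewrite /nbrs -cardE.
have h1 := degt (cur_endp vs).
have h2 := deg_adj (cur s).
have h3 := cardsD1 (prev s) [set x : V | adj (cur s) x].
have h4 : [set x : V | adj (cur s) x] :\ prev s \subset [set x : V | adj (cur s) x && (x != prev s)].
  by apply/subsetP => x; rewrite !inE => /andP [-> ->].
have h5 := subset_leq_card h4.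
move: h1 h2 h3 h5; move: #|inc k C' (cur s)| #|[set x : V | adj (cur s) x]|.
move: #|[set x : V | adj (cur s) x] :\ prev s| #|[set x : V | adj (cur s) x && (x != prev s)]|.
move: (prev s \in [set x : V | adj (cur s) x]) => b q1 q2 q3 q4.
case: b => /=; lia.
Qed.

Lemma moore m : 0 < m -> 2 * m <= alpha -> t.-1 ^ m <= #|grassmannian F n k.-1|.
Proof.
move=> m0 m2.
apply: leq_trans (walks_size m nbrs_size) _.
rewrite -(size_map cur) cardE.
apply: uniq_leq_size.
  rewrite map_inj_in_uniq ?walks_uniq //.
  move=> s1 s2 /walks_spec /andP [v1 /eqP z1] /walks_spec /andP [v2 /eqP z2] e.
  by apply: claimB => //; rewrite ?z1 ?z2.
move=> W /mapP [s sw ->]; rewrite mem_enum inE.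
by case/andP: (walks_spec sw) => vs _; rewrite cur_dim.
Qed.

End W.

Lemma code_bound (F : finFieldType) (n k delta alpha : nat) (C : {set subsp F n}) (t m : nat) :
  2 <= k -> 3 <= alpha -> alpha - 2 < delta -> is_covering_code k delta alpha C ->
  alpha <= t -> 0 < m -> 2 * m <= alpha -> #|grassmannian F n k.-1| < t.-1 ^ m ->
  #|C| <= #|grassmannian F n k.-1| * t.
Proof.
move=> k2 a3 hd hcov hat m0 m2 hN.
rewrite leqNgt; apply/negP => hC.
have eS : endp k C \subset grassmannian F n k.-1.
  apply/subsetP => v; rewrite !inE => /existsP [U /andP [UC hU]].
  have [/andP [_ d1] /andP [_ d2] _] := hab k2 (dimC hcov UC).
  by case/orP: hU => /eqP <-.
have h1 : #|endp k C| * t < #|C|.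
  apply: leq_ltn_trans hC; rewrite leq_mul2r subset_leq_card ?orbT //.
have [C' [C'C ne degt]] := prune k2 h1.
case/set0Pn: ne => U UC'.
have W0E : ha k U \in endp k C'.
  by rewrite inE; apply/existsP; exists U; rewrite UC' eqxx.
have degW0 : alpha <= #|inc k C' (ha k U)| by apply: leq_trans hat (degt _ W0E).
have hcov' : is_covering_code k delta alpha C := hcov.
have := moore k2 a3 hd hcov C'C W0E degW0 degt m0 m2.
by rewrite leqNgt hN.
Qed.

Lemma grass_card (F : finFieldType) (n d : nat) : #|grassmannian F n d| <= #|F| ^ (n * d).
Proof.
pose f (W : subsp F n) : {ffun 'I_d -> 'rV[F]_n} := [ffun i : 'I_d => nth (GRing.zero : 'rV[F]_n) (tval (vbasis W)) i].
have inj : {in grassmannian F n d &, injective f}.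
  move=> W1 W2; rewrite !inE => /eqP d1 /eqP d2 e.
  have e2 : tval (vbasis W1) = tval (vbasis W2).
    have s1 : size (tval (vbasis W1)) = d := etrans (size_tuple _) d1.
    have s2 : size (tval (vbasis W2)) = d := etrans (size_tuple _) d2.
    apply: (@eq_from_nth _ (GRing.zero : 'rV[F]_n)); first by rewrite s1 s2.
    move=> i; rewrite s1 => lti.
    by have := congr1 (fun g : {ffun 'I_d -> 'rV[F]_n} => g (Ordinal lti)) e; rewrite /f !ffunE.
  by rewrite -(span_basis (vbasisP W1)) -(span_basis (vbasisP W2)) e2.
rewrite -(card_in_imset inj).
apply: leq_trans (max_card _) _.
by rewrite card_ffun card_mx card_ord mul1n expnM.
Qed.

Lemma nat_bound (F : finFieldType) (n k delta alpha : nat) :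
  (2 <= k)%N -> (3 <= alpha)%N -> (alpha - 2 < delta)%N ->
  (B_cov F n k delta alpha <= #|F| ^ (n * (k - 1)) * (#|F| ^ (((k - 1) * n) %/ (alpha %/ 2)).+1 + alpha))%N.
Proof.
move=> k2 a3 hd.
set m := alpha %/ 2; set r := (((k - 1) * n) %/ m).+1; set q := #|F|.
have q2 : (1 < q)%N by exact: finNzRing_gt1.
have m0 : (0 < m)%N by rewrite /m divn_gt0 //; apply: leq_trans a3.
have m2 : (2 * m <= alpha)%N by rewrite mulnC; exact: leq_divM.
apply/bigmax_leqP => C hC.
have hN := grass_card F n k.-1.
have hk1 : k.-1 = (k - 1)%N by rewrite subn1.
apply: leq_trans (code_bound k2 a3 hd hC (leq_addl (q ^ r) alpha) m0 m2 _) _.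
- apply: leq_ltn_trans hN _.
  apply: (@leq_trans ((q ^ r) ^ m)); last first.
    rewrite leq_exp2r // -subn1 -addnBA; [exact: leq_addr | by apply: leq_trans a3].
  rewrite -expnM ltn_exp2l // hk1 mulnC /r; exact: ltn_ceil.
- by rewrite leq_mul2r -hk1 hN orbT.
Qed.

End Helpers.

Lemma INR_expn (a j : nat) : INR (expn a j) = Rpow_def.pow (INR a) j.
Proof.
elim: j => [|j IH]; first by rewrite expn0.
rewrite expnS /=. rewrite -IH. exact: (mult_INR a (expn a j)).
Qed.

Theorem mainTheorem7 (F : finFieldType) (k delta alpha : nat) :
  (2 <= k)%N -> (3 <= alpha)%N -> (0 < delta)%N -> (alpha - 2 < delta)%N ->
  exists c : R, Rlt 0 c /\
  exists N : nat, forall n : nat, (N <= n)%N ->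
    Rle (INR (B_cov F n k delta alpha))
        (Rmult c (Rpower (INR #|F|)
                   (Rmult (Rmult (Rplus 1 (Rinv (INR (alpha %/ 2))))
                                 (INR (k - 1))) (INR n)))).
Proof.
move=> k2 a3 d0 hd.
have q2 : (1 < #|F|)%N by exact: finNzRing_gt1.
have Q1 : (1 <= INR #|F|)%R by apply: (le_INR 1); apply/leP; apply: ltnW.
have Q0 : (0 < INR #|F|)%R by lra.
have m0 : (0 < alpha %/ 2)%N by rewrite divn_gt0 //; apply: leq_trans a3.
have M0 : (0 < INR (alpha %/ 2))%R by apply: (lt_INR 0); apply/ltP.
exists (INR #|F| + INR alpha)%R; split; first by have := pos_INR alpha; lra.
exists 0%N => n _.
have hB := le_INR _ _ (leP (Helpers.nat_bound F n k2 a3 hd)).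
set q := #|F| in hB Q1 Q0 *; set m := (alpha %/ 2)%N in hB M0 *.
set d := (((k - 1) * n) %/ m)%N in hB.
set K := INR (k - 1); set Nn := INR n; set M := INR m in M0 *.
have hd1 : (INR d <= K * Nn / M)%R.
  have h := le_INR _ _ (leP (leq_divM ((k - 1) * n) m)).
  rewrite (mult_INR d m) (mult_INR (k - 1) n) in h.
  rewrite -/M -/K -/Nn in h.
  apply (Rmult_le_reg_r M) => //.
  replace (K * Nn / M * M)%R with (K * Nn)%R by (field; lra). lra.
rewrite (mult_INR (expn q (n * (k - 1))) _) (plus_INR (expn q d.+1) alpha) !INR_expn in hB.
rewrite -!Rpower_pow // in hB.
rewrite (mult_INR n (k - 1)) S_INR -/K -/Nn in hB.
set P := Rpower (INR q) (K * Nn / M).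
have P1 : (1 <= P)%R.
  rewrite -(Rpower_O (INR q)) //; apply: Rle_Rpower => //.
  apply: Rmult_le_pos; [apply: Rmult_le_pos; apply: pos_INR | left; apply: Rinv_0_lt_compat; lra].
have hr : (Rpower (INR q) (INR d + 1) <= INR q * P)%R.
  rewrite Rpower_plus Rpower_1 // Rmult_comm; apply: Rmult_le_compat_l; first lra.
  by apply: Rle_Rpower.
have E0 : (0 <= Rpower (INR q) (Nn * K))%R by left; apply: exp_pos.
have hexp : ((1 + / M) * K * Nn = K * Nn + K * Nn / M)%R by field; lra.
rewrite hexp Rpower_plus -/P.
clearbody P.
apply: (Rle_trans _ _ _ hB).
have A0 : (0 <= INR alpha)%R by apply: pos_INR.
have hP := Rmult_le_compat_l (INR alpha) 1 P A0 P1.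
have : (Rpower (INR q) (INR d + 1) + INR alpha <= (INR q + INR alpha) * P)%R. lra.
move=> h; rewrite (Rmult_comm Nn K) in E0 *.
have := Rmult_le_compat_l _ _ _ E0 h; lra.
Qed.
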